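(* Let $D,k\ge 1$ and $b\ge 0$ be integers. Every rooted tree $T$ of maximum degree at most $D$, with $b(T)\le b$, and with more than $f(D,b,k)$ leaves contains a comb with $k$ teeth, all of which are leaves of $T$.
   Context: For a rooted tree $T$, $b(T)$ denotes the maximum depth of a rooted complete binary tree which appears in $T$ as a rooted minor (the depth of a rooted tree is the maximum number of edges of a root-leaf path). The function $f:\mathbb{N}^3\to\mathbb{N}$ is defined recursively by $f(D,b,k)=1$ if $k=1$ or $b=0$, and $f(D,b,k)=f(D,b,k-1)+(D-1)\cdot f(D,b-1,k-1)$ if $k\ge 2$ and $b\ge 1$. A comb with teeth $v_1,\ldots,v_k$ is a tree consisting of a path $P$ (the spine) and vertex-disjoint paths $P_1,\ldots,P_k$ of length at least one such that $P_i$ joins $v_i$ to a vertex of $P$. *)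

(* Defs.v *)
From mathcomp Require Import all_boot.
Set Implicit Arguments. Unset Strict Implicit. Unset Printing Implicit Defensive.

Section Graphs.
Variable V : finType.
Implicit Types (e : rel V) (r x y : V) (A : {set V}).

Definition acyclic e := forall c : seq V, 2 < size c -> ~~ ucycleb e c.
Definition is_tree e :=
  [/\ symmetric e, irreflexive e, (forall x y, connect e x y) & acyclic e].

Definition nbhd e x : {set V} := [set y | e x y].

(* Leaves of the tree rooted at r: vertices without children, i.e. non-root
   vertices of degree 1 (and the root only when it is the unique vertex). *)
Definition is_leaf e r x : bool :=
  if x == r then #|nbhd e x| == 0 else #|nbhd e x| == 1.

Definition connected_in e A :=
  forall x y, x \in A -> y \in A ->
    connect [rel u v | [&& e u v, u \in A & v \in A]] x y.

Definition rooted_minor (W : finType) (eH : rel W) (rH : W) e r :=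
  exists phi : W -> {set V},
  [/\ (forall w, phi w != set0),
      (forall w, connected_in e (phi w)),
      (forall w w', w != w' -> [disjoint phi w & phi w']),
      (forall w w', eH w w' ->
         exists x y, [/\ x \in phi w, y \in phi w' & e x y])
    & r \in phi rH].

Definition is_path e (p : seq V) : bool :=
  if p is x :: s then path e x s && uniq p else false.

(* Spine P; tooth paths Q i = [v_i; ...; u_i] of length >= 1 with u_i on P
   (and only u_i on P), pairwise vertex-disjoint, tooth v_i a leaf of T. *)
Definition has_leaf_comb e r (k : nat) :=
  exists (P : seq V) (Q : 'I_k -> seq V),
  [/\ is_path e P,
      (forall i, [/\ is_path e (Q i), 1 < size (Q i) & last r (Q i) \in P]),
      (forall i x, x \in Q i -> x != last r (Q i) -> x \notin P),
      (forall i j x, i != j -> x \in Q i -> x \notin Q j)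
    & (forall i, is_leaf e r (head r (Q i)))].

End Graphs.

(* Rooted complete binary tree of depth d, in heap numbering:
   vertices 0 .. 2^(d+1)-2, root 0, children of i are 2i+1 and 2i+2. *)
Definition cbt_size (d : nat) := 2 ^ d.+1 - 1.

Lemma cbt_size_gt0 d : 0 < cbt_size d.
Proof. by rewrite /cbt_size subn_gt0 -{1}(expn0 2) ltn_exp2l. Qed.

Definition cbt_root (d : nat) : 'I_(cbt_size d) := Ordinal (cbt_size_gt0 d).

Definition cbt_rel (d : nat) : rel 'I_(cbt_size d) :=
  fun i j => [|| (j : nat) == i.*2.+1, (j : nat) == i.*2.+2,
                 (i : nat) == j.*2.+1 | (i : nat) == j.*2.+2].

Definition binary_rooted_minor (V : finType) (e : rel V) (r : V) (d : nat) :=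
  rooted_minor (@cbt_rel d) (cbt_root d) e r.

Fixpoint f (D b k : nat) {struct k} : nat :=
  match k with
  | 0 => 1
  | k'.+1 =>
    match k' with
    | 0 => 1
    | _ => match b with
           | 0 => 1
           | b'.+1 => f D b k' + (D - 1) * f D b' k'
           end
    end
  end.

(* Main.v *)
Require Import Defs.
From mathcomp Require Import all_boot zify.
From Stdlib Require Import Classical_Prop.
Set Implicit Arguments. Unset Strict Implicit. Unset Printing Implicit Defensive.

Fixpoint dec_aux (n j : nat) : seq bool :=
  if n is n'.+1 then (if j is j'.+1 then rcons (dec_aux n' j'./2) (odd j') else [::])
  else [::].
Definition dec j := dec_aux j j.

Lemma dec_aux_eq n m j : j <= n -> j <= m -> dec_aux n j = dec_aux m j.
Proof.
elim: n m j => [|n IH] m j.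
  by rewrite leqn0 => /eqP->; case: m.
case: j => [|j] hn hm; first by case: m {hm}.
case: m hm => [//|m] hm /=; congr rcons; apply: IH.
  by rewrite leq_half_double -muln2; lia.
by rewrite leq_half_double -muln2; lia.
Qed.

Lemma decS j : dec j.+1 = rcons (dec j./2) (odd j).
Proof.
rewrite /dec /=; congr rcons; apply: dec_aux_eq => //.
by rewrite leq_half_double -muln2; lia.
Qed.

Lemma dec0 : dec 0 = [::].
Proof. by []. Qed.

Definition enc (s : seq bool) := foldl (fun i (x : bool) => (i.*2 + x).+1) 0 s.

Lemma encK j : enc (dec j) = j.
Proof.
elim: j {-2}j (leqnn j) => [|n IH] j hj; first by move: hj; rewrite leqn0 => /eqP->.
case: j hj => [//|j] hj; rewrite decS /enc foldl_rcons -/(enc _) IH.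
  by rewrite -{3}(odd_double_half j) addnC.
by rewrite leq_half_double -muln2; lia.
Qed.

Lemma dec_inj i j : dec i = dec j -> i = j.
Proof. by move=> h; rewrite -(encK i) h encK. Qed.

Lemma dec_size m j : j < cbt_size m -> size (dec j) <= m.
Proof.
rewrite /cbt_size; elim: m j => [|m IH] j.
  by rewrite expn1; case: j.
case: j => [//|j] hj; rewrite decS size_rcons ltnS; apply: IH.
move: hj; rewrite !expnS -{1}(odd_double_half j) -!muln2.
have := odd j; have : 0 < 2 ^ m by rewrite expn_gt0.
by case: (odd j) => /=; lia.
Qed.

Lemma dec_rel m (i j : 'I_(cbt_size m)) : cbt_rel i j ->
  (exists x, dec j = rcons (dec i) x) \/ (exists x, dec i = rcons (dec j) x).
Proof.
have h1 : forall k, dec k.*2.+1 = rcons (dec k) false.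
  by move=> k; rewrite decS doubleK odd_double.
have h2 : forall k, dec k.*2.+2 = rcons (dec k) true.
  by move=> k; rewrite decS /= uphalf_double odd_double.
rewrite /cbt_rel; case/or4P => /eqP E.
- by left; exists false; rewrite E h1.
- by left; exists true; rewrite E h2.
- by right; exists false; rewrite E h1.
- by right; exists true; rewrite E h2.
Qed.

Lemma f_ge1 D b k : 0 < f D b k.
Proof.
elim: k b => [|k IH] b //=; case: k IH => [//|k] IH; case: b => [//|b].
by rewrite addn_gt0 IH.
Qed.

Lemma f_mono D b k : f D b k <= f D b.+1 k.
Proof.
elim: k b => [|k IH] b //; case: k IH => [//|k] IH; case: b => [|b].
  exact: f_ge1.
by rewrite [f D b.+1 _]/= [f D b.+2 _]/=; apply: leq_add (IH _) (leq_mul (leqnn _) (IH _)).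
Qed.
Section Tree.
Variables (V : finType) (e : rel V) (r : V).
Hypothesis esym : symmetric e.
Hypothesis eirr : irreflexive e.
Hypothesis econn : forall x y, connect e x y.
Hypothesis eacyc : acyclic e.

Definition avoid (v : V) : rel V := [rel a b | [&& e a b, a != v & b != v]].
Definition comp (v c : V) : {set V} := [set x | connect (avoid v) c x].

Lemma avoid_sym v : symmetric (avoid v).
Proof. by move=> a b; rewrite /avoid /= esym; case: (a != v); case: (b != v); rewrite ?andbF. Qed.

Lemma avoid_e v : subrel (avoid v) e.
Proof. by move=> a b /andP[]. Qed.

Lemma uniq_connect (R : rel V) a x : connect R a x ->
  exists p, [/\ path R a p, last a p = x & uniq (a :: p)].
Proof.
move/connectP=> [p pth ->]; case/shortenP: pth => p' pth' uq _.
by exists p'.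
Qed.

Lemma avoid_notin v a p : path (avoid v) a p -> v \notin p.
Proof.
elim: p a => [//|y p IH] a /= /andP[/and3P[_ _ yv] /IH].
by rewrite inE negb_or eq_sym yv.
Qed.

Lemma neq_of_e a b : e a b -> a != b.
Proof. by apply: contraTneq => ->; rewrite eirr. Qed.

Lemma no_avoid_cycle v a b : e v a -> e v b -> a != b -> ~~ connect (avoid v) a b.
Proof.
move=> eva evb ab; apply/negP => /uniq_connect [p [pth lst uq]].
have av : a != v by rewrite eq_sym neq_of_e.
have := eacyc (c := v :: a :: p).
have p0 : p != [::] by case: p pth lst uq => //= _ lst0; rewrite lst0 eqxx in ab.
have -> : 2 < size (v :: a :: p) by case: p p0 {pth lst uq}.
move/(_ isT); apply/negP; apply/negPn.
rewrite /ucycleb /cycle /= rcons_path eva (sub_path (@avoid_e v) pth) lst esym evb /=.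
by rewrite inE negb_or eq_sym av (avoid_notin pth) /= -[_ && _]/(uniq (a :: p)) uq.
Qed.

Lemma comp_disj v c1 c2 : e v c1 -> e v c2 -> c1 != c2 ->
  [disjoint comp v c1 & comp v c2].
Proof.
move=> e1 e2 c12; apply/pred0P => x /=; rewrite !inE.
apply/negbTE/negP => /andP[h1 h2].
have := no_avoid_cycle e1 e2 c12; apply/negP/negPn.
by apply: connect_trans h1 _; rewrite (sym_connect_sym (@avoid_sym v)).
Qed.

Lemma comp_self v c : c \in comp v c.
Proof. by rewrite inE connect0. Qed.

Lemma notin_comp v c : c != v -> v \notin comp v c.
Proof.
move=> cv; rewrite inE; apply/negP => /connectP [p pth vl].
have : v \in c :: p by rewrite vl mem_last.
by rewrite inE (negbTE (avoid_notin pth)) orbF eq_sym (negbTE cv).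
Qed.

Lemma connect_avoid_mono u w a x : connect (avoid u) a x ->
  ~~ connect (avoid u) a w -> connect (avoid w) a x.
Proof.
move=> /connectP [p pth ->] nw; apply/connectP; exists p => //.
have H : {in [pred y | connect (avoid u) a y] &, subrel (avoid u) (avoid w)}.
  move=> y z /= hy hz /and3P[eyz _ _]; rewrite /avoid /= eyz.
  rewrite inE /= in hy; rewrite inE /= in hz.
  by apply/and3P; split => //; apply/eqP => E; [rewrite -E hy in nw | rewrite -E hz in nw].
apply: (sub_in_path H _ pth); apply/allP => y; exact: (path_connect pth).
Qed.

Lemma comp_dec v c : e v c ->
  comp v c = c |: \bigcup_(c' in nbhd e c :\ v) comp c c'.
Proof.
move=> evc; have cv : c != v by rewrite eq_sym neq_of_e.
apply/setP => x; rewrite !inE; apply/idP/idP.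
  case: (eqVneq x c) => [->|xc] //= /uniq_connect [[|y p] [pth lst uq]].
    by rewrite /= in lst; rewrite lst eqxx in xc.
  move: pth uq => /= /andP[/and3P[ecy _ yv] pth] /andP[cn uq].
  apply/bigcupP; exists y; first by rewrite !inE yv.
  rewrite inE; apply/connectP; exists p => //.
  have H : {in predC1 c &, subrel (avoid v) (avoid c)}.
    by move=> a b /= ac bc /and3P[eab _ _]; rewrite inE /= in ac; rewrite inE /= in bc; rewrite /avoid /= eab ac bc.
  apply: (sub_in_path H _ pth); apply/allP => z zi; apply/eqP => E; by move: cn; rewrite -E zi.
case/orP => [/eqP ->|/bigcupP [c' hc' hx]]; first exact: connect0.
move: hc'; rewrite !inE => /andP[c'v ecc'].
have nv : ~~ connect (avoid c) c' v.
  by apply: no_avoid_cycle => //; rewrite esym.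
rewrite inE in hx.
apply: connect_trans (connect1 _) (connect_avoid_mono hx nv).
by rewrite /avoid /= ecc' cv c'v.
Qed.

Lemma comp_root : forall x, (x == r) || (x \in \bigcup_(c in nbhd e r) comp r c).
Proof.
move=> x; case: (eqVneq x r) => [//|xr] /=.
have /uniq_connect [[|y p] [pth lst uq]] := econn r x.
  by rewrite /= in lst; rewrite lst eqxx in xr.
move: pth uq => /= /andP[ery pth] /andP[rn uq].
apply/bigcupP; exists y; first by rewrite inE.
rewrite inE; apply/connectP; exists p => //.
have H : {in predC1 r &, subrel e (avoid r)}.
  by move=> a b /= ac bc eab; rewrite inE /= in ac; rewrite inE /= in bc; rewrite /avoid /= eab ac bc.
apply: (sub_in_path H _ pth); apply/allP => z zi; apply/eqP => E; by move: rn; rewrite -E zi.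
Qed.


Definition SS v (C : {set V}) := v |: \bigcup_(c in C) comp v c.
Definition leaves := [set x | is_leaf e r x].
Definition L (A : {set V}) := #|A :&: leaves|.
Definition good v (C : {set V}) := [/\ C \subset nbhd e v, is_leaf e r v = (C == set0)
  & forall c, c \in C -> r \notin comp v c].

Lemma S_child v c : e v c -> SS c (nbhd e c :\ v) = comp v c.
Proof. by move=> evc; rewrite /SS -comp_dec. Qed.

Lemma S_root : SS r (nbhd e r) = setT.
Proof. by apply/setP => x; rewrite /SS in_setU1 comp_root inE. Qed.

Lemma comp_sub_child v c c' : e v c -> c' \in nbhd e c :\ v ->
  comp c c' \subset comp v c.
Proof.
move=> evc hc'; rewrite [comp v c](comp_dec evc); apply/subsetP => x hx.
by rewrite in_setU1; apply/orP; right; apply/bigcupP; exists c'.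
Qed.

Lemma leaf_child v c : e v c -> c != r ->
  is_leaf e r c = (nbhd e c :\ v == set0).
Proof.
move=> evc cr; rewrite /is_leaf (negbTE cr) (cardsD1 v) inE esym evc.
by rewrite add1n eqSS cards_eq0.
Qed.

Lemma e_of_good v (C : {set V}) c : good v C -> c \in C -> e v c.
Proof. by case=> /subsetP sub _ _ /sub; rewrite inE. Qed.

Lemma good_child v (C : {set V}) c : good v C -> c \in C -> good c (nbhd e c :\ v).
Proof.
move=> g cC; have evc := e_of_good g cC; case: g => _ _ rn.
have cr : c != r by apply: contraNneq (rn _ cC) => <-; apply: comp_self.
split; first exact: subsetDl.
  exact: leaf_child.
move=> c' hc'; apply: contra (rn _ cC); apply/subsetP; exact: comp_sub_child.
Qed.

Lemma good_root : good r (nbhd e r).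
Proof.
split => //; first by rewrite /is_leaf eqxx cards_eq0.
move=> c; rewrite inE => erc; apply: notin_comp; by rewrite eq_sym neq_of_e.
Qed.

Lemma comp_sub_S v (C : {set V}) c : c \in C -> comp v c \subset SS v C.
Proof.
move=> cC; apply/subsetP => x hx; rewrite /SS in_setU1; apply/orP; right.
by apply/bigcupP; exists c.
Qed.

Lemma v_in_S v (C : {set V}) : v \in SS v C.
Proof. by rewrite /SS in_setU1 eqxx. Qed.

Lemma size_child v (C : {set V}) c : e v c -> c \in C -> #|comp v c| < #|SS v C|.
Proof.
move=> evc cC; have vn : v \notin comp v c by apply: notin_comp; rewrite eq_sym neq_of_e.
apply: (@leq_trans #|v |: comp v c|); first by rewrite cardsU1 vn.
apply: subset_leq_card; apply/subsetP => x; rewrite in_setU1 => /orP[/eqP->|hx].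
  exact: v_in_S.
exact: (subsetP (comp_sub_S v cC)).
Qed.

Lemma card_bigcup_le (I : finType) (P : {set I}) (F : I -> {set V}) :
  #|\bigcup_(i in P) F i| <= \sum_(i in P) #|F i|.
Proof.
elim/big_rec2: _ => [|i A n iP h]; first by rewrite cards0.
by apply: leq_trans (leq_card_setU _ _) _; rewrite leq_add2l.
Qed.

Lemma L_sum v (C : {set V}) : good v C -> C != set0 -> L (SS v C) <= \sum_(c in C) L (comp v c).
Proof.
move=> [_ lv _] C0; apply: leq_trans (card_bigcup_le C (fun c => comp v c :&: leaves)).
apply: subset_leq_card; apply/subsetP => x; rewrite inE => /andP[].
rewrite /SS in_setU1 => /orP[/eqP->|/bigcupP [c cC hx]].
  by rewrite inE lv (negbTE C0).
by move=> lx; apply/bigcupP; exists c => //; rewrite inE hx lx.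
Qed.

Lemma L_nil v : L (SS v set0) <= 1.
Proof.
rewrite /L /SS big_set0 setU0; apply: leq_trans (subset_leq_card (subsetIl _ _)) _.
by rewrite cards1.
Qed.

Lemma leaf_path n v c : #|comp v c| <= n -> e v c -> r \notin comp v c ->
  exists t, [/\ is_path e t, last r t = c, is_leaf e r (head r t)
            & {subset t <= comp v c}].
Proof.
elim: n v c => [|n IH] v c.
  by rewrite leqn0 cards_eq0 => /eqP E; have := comp_self v c; rewrite E inE.
move=> sz evc rn.
have cr : c != r by apply: contraNneq rn => <-; apply: comp_self.
case: (set_0Vmem (nbhd e c :\ v)) => [N0|[c' hc']].
  exists [:: c]; split => //=; first by rewrite (leaf_child evc) // N0.
  by move=> x; rewrite inE => /eqP->; apply: comp_self.
have ecc' : e c c' by move: hc'; rewrite !inE => /andP[].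
have sub := comp_sub_child evc hc'.
have [t [pt lt ht st]] : exists t, [/\ is_path e t, last r t = c', is_leaf e r (head r t)
            & {subset t <= comp c c'}].
  apply: (IH c c') => //.
    rewrite -ltnS; apply: leq_trans sz; apply: proper_card; apply/properP; split => //.
    exists c; first exact: comp_self.
    by apply: notin_comp; rewrite eq_sym neq_of_e.
  by apply: contra rn; apply: (subsetP sub).
have cn : c \notin t.
  by apply/negP => /st; apply/negP; apply: notin_comp; rewrite eq_sym neq_of_e.
case: t pt lt ht st cn => [//|x s] /= /andP[pt ut] lt ht st cn.
exists (x :: rcons s c); split => //=.
- rewrite rcons_path pt lt; move: cn ut.
  rewrite esym ecc' mem_rcons rcons_uniq !inE !negb_or => /andP[cx cs] /andP[xs us].
  by rewrite eq_sym cx xs cs us.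
- by rewrite last_rcons.
- move=> y; rewrite -rcons_cons mem_rcons inE => /orP[/eqP->|/st hy].
    exact: comp_self.
  exact: (subsetP sub).
Qed.

Lemma tooth v c : e v c -> r \notin comp v c ->
  exists t, [/\ is_path e t, 1 < size t, last r t = v, is_leaf e r (head r t)
            & forall x, x \in t -> x != v -> x \in comp v c].
Proof.
move=> evc rn.
have [t [pt lt ht st]] := leaf_path (leqnn _) evc rn.
have vn : v \notin t.
  by apply/negP => /st; apply/negP; apply: notin_comp; rewrite eq_sym neq_of_e.
case: t pt lt ht st vn => [//|x s] /= /andP[pt ut] lt ht st vn.
exists (x :: rcons s v); split => //=.
- rewrite rcons_path pt lt; move: vn ut.
  rewrite esym evc mem_rcons rcons_uniq !inE !negb_or => /andP[cx cs] /andP[xs us].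
  by rewrite eq_sym cx xs cs us.
- by rewrite size_rcons.
- by rewrite last_rcons.
- move=> y; rewrite -rcons_cons mem_rcons inE => /orP[/eqP->|/st hy //].
  by rewrite eqxx.
Qed.


Definition Mn (A : {set V}) v m := exists psi : seq bool -> {set V},
  [/\ (forall s, size s <= m -> psi s != set0),
      (forall s, size s <= m -> connected_in e (psi s)),
      (forall s t, size s <= m -> size t <= m -> s != t -> [disjoint psi s & psi t]),
      (forall s x, size s < m -> exists a b, [/\ a \in psi s, b \in psi (rcons s x) & e a b])
    & (forall s, size s <= m -> psi s \subset A) /\ v \in psi [::]].

Lemma disjP (A B : {set V}) : (forall x, x \in A -> x \in B -> False) -> [disjoint A & B].
Proof. by move=> H; apply/pred0P => x /=; apply/negbTE/negP => /andP[a b]; apply: H a b. Qed.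

Lemma conn1 v : connected_in e [set v].
Proof. by move=> x y; rewrite !inE => /eqP-> /eqP->; apply: connect0. Qed.

Lemma conn_add (X : {set V}) c v : connected_in e X -> c \in X -> e v c -> connected_in e (v |: X).
Proof.
move=> cX cin evc.
set R := [rel u w | [&& e u w, u \in v |: X & w \in v |: X]].
have sub : forall x y, x \in X -> y \in X -> connect R x y.
  move=> x y hx hy; apply: connect_sub (cX x y hx hy).
  move=> a b /and3P[eab ha hb]; apply: connect1.
  by rewrite /R /= eab !in_setU1 ha hb !orbT.
have vc : R v c by rewrite /R /= evc !in_setU1 eqxx cin orbT.
have cv : R c v by rewrite /R /= esym evc !in_setU1 eqxx cin orbT.
have toc : forall x, x \in v |: X -> connect R x c.
  move=> x; rewrite in_setU1 => /orP[/eqP->|hx]; first exact: connect1.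
  exact: sub.
have fromc : forall x, x \in v |: X -> connect R c x.
  move=> x; rewrite in_setU1 => /orP[/eqP->|hx]; first exact: connect1.
  exact: sub.
by move=> x y hx hy; apply: connect_trans (toc x hx) (fromc y hy).
Qed.

Lemma Mn0 (A : {set V}) v : v \in A -> Mn A v 0.
Proof.
move=> vA; exists (fun _ => [set v]); split.
- by move=> s _; apply/set0Pn; exists v; rewrite inE.
- by move=> s _; apply: conn1.
- by case=> [|? ?] [|? ?] //=; rewrite eqxx.
- by [].
- by split; [move=> s _; rewrite sub1set | rewrite inE].
Qed.

Lemma MnB (Ac A : {set V}) c v m : Mn Ac c m -> e v c -> v \notin Ac -> Ac \subset A -> v \in A ->
  Mn A v m.
Proof.
move=> [psi [ne cn dj adj [sb cin]]] evc vn sAc vA.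
have vpsi : forall s, size s <= m -> v \notin psi s.
  by move=> s hs; apply: contra vn; apply: (subsetP (sb s hs)).
exists (fun s => if s is [::] then v |: psi [::] else psi s); split.
- case=> [|x s] hs; last exact: ne.
  by apply/set0Pn; exists v; rewrite in_setU1 eqxx.
- case=> [|x s] hs; last exact: cn.
  exact: (conn_add (cn [::] isT) cin evc).
- have key : forall t, size t <= m -> t != [::] ->
     [disjoint v |: psi [::] & psi t].
    move=> t ht t0; apply: disjP => y; rewrite in_setU1 => /orP[/eqP->|hy] hy2.
      by move: (vpsi t ht); rewrite hy2.
    have D : [disjoint psi [::] & psi t] by apply: dj => //; rewrite eq_sym.
    by rewrite (disjointFr D hy) in hy2.
  case=> [|x s] [|y t] hs ht st //.
    exact: key.
  by rewrite disjoint_sym; apply: key.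
  exact: dj.
- case=> [|y s] x hs.
    have [a [b [ha hb eab]]] := adj [::] x hs.
    by exists a, b; rewrite in_setU1 ha orbT.
  exact: (adj (y :: s) x hs).
- split; last by rewrite in_setU1 eqxx.
  case=> [|x s] hs; last by apply: subset_trans (sb _ hs) sAc.
  apply/subsetP => y; rewrite in_setU1 => /orP[/eqP->//|hy].
  exact: (subsetP sAc _ (subsetP (sb [::] isT) _ hy)).
Qed.

Lemma MnA (A1 A2 A : {set V}) c1 c2 v m : Mn A1 c1 m -> Mn A2 c2 m -> e v c1 -> e v c2 ->
  [disjoint A1 & A2] -> v \notin A1 -> v \notin A2 -> A1 \subset A -> A2 \subset A ->
  v \in A -> Mn A v m.+1.
Proof.
move=> [p1 [ne1 cn1 dj1 adj1 [sb1 cin1]]] [p2 [ne2 cn2 dj2 adj2 [sb2 cin2]]].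
move=> ev1 ev2 d12 vn1 vn2 s1 s2 vA.
pose psi s := match s with [::] => [set v] | x :: s' => if x then p2 s' else p1 s' end.
exists psi; split.
- case=> [|[] s] /= hs; [by apply/set0Pn; exists v; rewrite inE| exact: ne2|exact: ne1].
- case=> [|[] s] /= hs; [exact: conn1| exact: cn2|exact: cn1].
- have vp1 : forall s, size s <= m -> v \notin p1 s.
    by move=> s hs; apply: contra vn1; apply: (subsetP (sb1 s hs)).
  have vp2 : forall s, size s <= m -> v \notin p2 s.
    by move=> s hs; apply: contra vn2; apply: (subsetP (sb2 s hs)).
  case=> [|x s] [|y t] /= hs ht st //.
  + by rewrite disjoints1; case: y; [apply: vp2|apply: vp1].
  + by rewrite disjoint_sym disjoints1; case: x; [apply: vp2|apply: vp1].
  + move: st; rewrite eqseq_cons.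
    case: x; case: y => /= st.
    * exact: dj2.
    * by apply: (disjointWl (sb2 s hs)); apply: (disjointWr (sb1 t ht)); rewrite disjoint_sym.
    * by apply: (disjointWl (sb1 s hs)); apply: (disjointWr (sb2 t ht)).
    * exact: dj1.
- case=> [|y s] x /= hs.
    by exists v, (if x then c2 else c1); case: x; rewrite inE eqxx.
  by case: y; [apply: adj2|apply: adj1].
- split; last by rewrite inE.
  case=> [|[] s] /= hs; first by rewrite sub1set.
    exact: subset_trans (sb2 _ hs) s2.
  exact: subset_trans (sb1 _ hs) s1.
Qed.


Lemma Mn_minor (A : {set V}) m : Mn A r m -> binary_rooted_minor e r m.
Proof.
move=> [psi [ne cn dj adj [sb cin]]].
exists (fun j : 'I_(cbt_size m) => psi (dec j)); split.
- by move=> w; apply: ne; apply: dec_size.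
- by move=> w; apply: cn; apply: dec_size.
- move=> w w' ww'; apply: dj; try exact: dec_size.
  by apply: contra ww' => /eqP /dec_inj E; apply/eqP/val_inj.
- move=> w w' /dec_rel [[x E]|[x E]].
    have hs : size (dec w) < m by have := dec_size (ltn_ord w'); rewrite E size_rcons.
    by have [a [b [ha hb eab]]] := adj _ x hs; exists a, b; rewrite E.
  have hs : size (dec w') < m by have := dec_size (ltn_ord w); rewrite E size_rcons.
  by have [a [b [ha hb eab]]] := adj _ x hs; exists b, a; rewrite E esym.
- exact: cin.
Qed.


Definition CombAt (v : V) (A : {set V}) (k : nat) :=
  exists (P : seq V) (Q : nat -> seq V),
  [/\ is_path e (v :: P) /\ {subset v :: P <= A},
      (forall i, i < k -> [/\ is_path e (Q i), 1 < size (Q i),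
          last r (Q i) \in v :: P, {subset Q i <= A} & is_leaf e r (head r (Q i))]),
      (forall i x, i < k -> x \in Q i -> x != last r (Q i) -> x \notin v :: P)
    & (forall i j x, i < k -> j < k -> i != j -> x \in Q i -> x \notin Q j)].

Lemma Comb0 c (A : {set V}) : c \in A -> CombAt c A 0.
Proof.
move=> cA; exists [::], (fun _ => [::]); split => //.
by split => // x; rewrite inE => /eqP->.
Qed.

Lemma Prepend c (Ac A : {set V}) v k : CombAt c Ac k -> e v c -> v \notin Ac ->
  Ac \subset A -> v \in A -> CombAt v A k.
Proof.
move=> [P [Q [[pP sP] tQ nQ dQ]]] evc vn sA vA.
have vnP : v \notin c :: P by apply: contra vn; apply: sP.
exists (c :: P), Q; split.
- split; first by move: pP => /= /andP[pP uP]; rewrite evc pP /= vnP uP.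
  move=> x; rewrite inE => /orP[/eqP->//|/sP hx]; exact: (subsetP sA).
- move=> i hi; have [? ? l s ?] := tQ i hi; split => //.
    by rewrite inE l orbT.
  by move=> x /s hx; exact: (subsetP sA).
- move=> i x hi hx hl; rewrite inE negb_or (nQ i x hi hx hl) andbT.
  have [_ _ _ s _] := tQ i hi.
  by apply: contraNneq vn => <-; apply: s.
- exact: dQ.
Qed.

Lemma AddTooth c (Ac Bc A : {set V}) v k t : CombAt c Ac k -> e v c -> v \notin Ac ->
  v \notin Bc -> [disjoint Ac & Bc] -> Ac \subset A -> Bc \subset A -> v \in A ->
  is_path e t -> 1 < size t -> last r t = v -> is_leaf e r (head r t) ->
  (forall x, x \in t -> x != v -> x \in Bc) ->
  CombAt v A k.+1.
Proof.
move=> [P [Q [[pP sP] tQ nQ dQ]]] evc vn vnB dAB sA sB vA pt st lt ht tB.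
have vnP : v \notin c :: P by apply: contra vn; apply: sP.
have notB : forall x, x \in Ac -> x \notin Bc.
  by move=> x hx; apply/negP => hB; rewrite (disjointFr dAB hx) in hB.
have tin : forall x, x \in t -> x \in Ac -> x = v.
  move=> x xt xA; apply/eqP; apply/negPn/negP => xv.
  by have := notB x xA; rewrite (tB x xt xv).
exists (c :: P), (fun i => if i < k then Q i else t); split.
- split; first by move: pP => /= /andP[pP uP]; rewrite evc pP /= vnP uP.
  move=> x; rewrite inE => /orP[/eqP->//|/sP hx]; exact: (subsetP sA).
- move=> i hi; case: ifP => ik.
    have [? ? l s ?] := tQ i ik; split => //.
      by rewrite inE l orbT.
    by move=> x /s hx; exact: (subsetP sA).
  split => //; first by rewrite lt inE eqxx.
  move=> x xt; case: (eqVneq x v) => [->//|xv].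
  exact: (subsetP sB _ (tB x xt xv)).
- move=> i x hi; case: ifP => ik hx hl.
    rewrite inE negb_or (nQ i x ik hx hl) andbT.
    have [_ _ _ s _] := tQ i ik.
    by apply: contraNneq vn => <-; apply: s.
  rewrite lt in hl; rewrite inE negb_or hl /=.
  by apply/negP => /sP xA; have := notB x xA; rewrite (tB x hx hl).
- move=> i j x hi hj ij; case: ifP => ik; case: ifP => jk.
  + exact: dQ.
  + move=> xQ; apply/negP => xt.
    have [_ _ _ s _] := tQ i ik.
    have xv := tin x xt (s x xQ); rewrite xv in xQ.
    by move: vn; rewrite (s v xQ).
  + move=> xt; apply/negP => xQ.
    have [_ _ _ s _] := tQ j jk.
    have xv := tin x xt (s x xQ); rewrite xv in xQ.
    by move: vn; rewrite (s v xQ).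
  + have ei : i = k by apply/eqP; rewrite eqn_leq -ltnS hi leqNgt ik.
    have ej : j = k by apply/eqP; rewrite eqn_leq -ltnS hj leqNgt jk.
    by rewrite ei ej eqxx in ij.
Qed.


Variable D : nat.
Hypothesis deg : forall x, #|nbhd e x| <= D.

Lemma claim n : forall v (C : {set V}) b k, #|SS v C| <= n -> good v C -> 0 < k ->
  ~ Mn (SS v C) v b.+1 -> f D b k < L (SS v C) -> CombAt v (SS v C) k.
Proof.
elim: n => [|n IH] v C b k.
  by rewrite leqn0 cards_eq0 => /eqP E; have := v_in_S v C; rewrite E inE.
move=> sz g k0 nM Lgt.
have evc : forall c, c \in C -> e v c by move=> c; apply: e_of_good g.
have vn : forall c, c \in C -> v \notin comp v c.
  by move=> c cC; apply: notin_comp; rewrite eq_sym neq_of_e // evc.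
have rn : forall c, c \in C -> r \notin comp v c by case: g.
have IHc : forall c b k, c \in C -> 0 < k -> ~ Mn (comp v c) c b.+1 ->
    f D b k < L (comp v c) -> CombAt c (comp v c) k.
  move=> c b' k' cC k'0 nM' L'.
  have := IH c (nbhd e c :\ v) b' k'; rewrite (S_child (evc c cC)); apply => //.
    by rewrite -ltnS; apply: leq_trans sz; apply: size_child => //; apply: evc.
  exact: (good_child g cC).
have noM : forall c, c \in C -> ~ Mn (comp v c) c b.+1.
  move=> c cC M; apply: nM; apply: (MnB M (evc c cC) (vn c cC)).
    exact: comp_sub_S.
  exact: v_in_S.
have ext : forall c c2 k', c \in C -> c2 \in C -> c != c2 ->
    CombAt c (comp v c) k' -> CombAt v (SS v C) k'.+1.
  move=> c c2 k' cC c2C cc2 Cb.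
  have [t [pt st lt ht tB]] := tooth (evc c2 c2C) (rn c2 c2C).
  apply: (AddTooth Cb (evc c cC) (vn c cC) (vn c2 c2C) _ _ _ _ pt st lt ht tB).
  - by apply: comp_disj => //; apply: evc.
  - exact: comp_sub_S.
  - exact: comp_sub_S.
  - exact: v_in_S.
case: (set_0Vmem C) => [C0 | [c1 c1C]].
  by move: Lgt; rewrite C0 => Lgt; have := L_nil v; have := f_ge1 D b k; lia.
have C0 : C != set0 by apply/set0Pn; exists c1.
have Lsum := L_sum g C0.
case: (set_0Vmem (C :\ c1)) => [C1 | [c2 c2C']].
  have EC : C = [set c1] by rewrite -(setD1K c1C) C1 setU0.
  have E1 : \sum_(c in C) L (comp v c) = L (comp v c1) by rewrite EC big_set1.
  rewrite E1 in Lsum.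
  apply: (Prepend (IHc c1 b k c1C k0 (noM c1 c1C) (leq_trans Lgt Lsum)) (evc c1 c1C) (vn c1 c1C)).
    exact: comp_sub_S.
  exact: v_in_S.
move: c2C'; rewrite !inE => /andP[c21 c2C].
case: k k0 Lgt => [//|k'] _ Lgt; case: k' Lgt => [|k''] Lgt.
  apply: (ext c1 c2 0 c1C c2C); first by rewrite eq_sym.
  exact/Comb0/comp_self.
case: b nM Lgt noM => [|b'] nM Lgt noM.
  exfalso; apply: nM.
  apply: (MnA (Mn0 (comp_self v c1)) (Mn0 (comp_self v c2)) (evc _ c1C) (evc _ c2C)).
  - by apply: comp_disj; rewrite ?evc // eq_sym.
  - exact: vn.
  - exact: vn.
  - exact: comp_sub_S.
  - exact: comp_sub_S.
  - exact: v_in_S.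
have other : forall c, c \in C -> exists2 c', c' \in C & c != c'.
  move=> c cC; case: (eqVneq c c1) => [->|cc1]; last by exists c1.
  by exists c2; rewrite // eq_sym.
case: (classic (exists c, c \in C /\ f D b'.+1 k''.+1 < L (comp v c))) => [[c [cC Lc]]|nA].
  have [c' c'C cc'] := other c cC.
  by apply: (ext c c' _ cC c'C cc'); apply: (IHc c b'.+1) => //; apply: noM.
case: (classic (exists c, [/\ c \in C, ~ Mn (comp v c) c b'.+1 & f D b' k''.+1 < L (comp v c)])) => [[c [cC nMc Lc]]|nB].
  have [c' c'C cc'] := other c cC.
  by apply: (ext c c' _ cC c'C cc'); apply: (IHc c b').
exfalso.
have hM2 : forall c c', c \in C -> c' \in C -> c != c' ->
    Mn (comp v c) c b'.+1 -> Mn (comp v c') c' b'.+1 -> False.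
  move=> c c' cC c'C cc' M M'; apply: nM.
  apply: (MnA M M' (evc _ cC) (evc _ c'C)).
  - exact: comp_disj (evc _ cC) (evc _ c'C) cc'.
  - exact: vn.
  - exact: vn.
  - exact: comp_sub_S.
  - exact: comp_sub_S.
  - exact: v_in_S.
have [c0 [c0C hc0]] : exists c0, c0 \in C /\
    forall c, c \in C -> c != c0 -> ~ Mn (comp v c) c b'.+1.
  case: (classic (exists c, c \in C /\ Mn (comp v c) c b'.+1)) => [[c [cC Mc]]|nex].
    by exists c; split => // c' c'C c'c Mc'; apply: (hM2 c' c).
  by exists c1; split => // c cC _ M; apply: nex; exists c.
have L0 : L (comp v c0) <= f D b'.+1 k''.+1.
  by rewrite leqNgt; apply/negP => h; apply: nA; exists c0.
have Lo : forall c, c \in C :\ c0 -> L (comp v c) <= f D b' k''.+1.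
  move=> c; rewrite !inE => /andP[cc0 cC].
  by rewrite leqNgt; apply/negP => h; apply: nB; exists c; split => //; apply: hc0.
have Hs : \sum_(c in C :\ c0) L (comp v c) <= #|C :\ c0| * f D b' k''.+1.
  by rewrite -sum_nat_const; apply: leq_sum.
have Hc : #|C :\ c0| <= D.-1.
  have : #|C| <= D by apply: leq_trans (deg v); apply: subset_leq_card; case: g.
  by rewrite (cardsD1 c0) c0C; lia.
have Hm := leq_mul Hc (leqnn (f D b' k''.+1)).
have Ef : f D b'.+1 k''.+2 = f D b'.+1 k''.+1 + (D - 1) * f D b' k''.+1 by [].
rewrite Ef subn1 in Lgt; move: Lsum; rewrite (big_setD1 _ c0C) /= => Lsum.
have := leq_trans Lsum (leq_add L0 (leq_trans Hs Hm)).
by rewrite leqNgt Lgt.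
Qed.

End Tree.

Unset Implicit Arguments.
Set Strict Implicit.

Theorem corollary16 (D b k : nat) (V : finType) (e : rel V) (r : V) :
  1 <= D -> 1 <= k ->
  is_tree e ->
  (forall x : V, #|nbhd e x| <= D) ->
  (forall d : nat, binary_rooted_minor e r d -> d <= b) ->
  f D b k < #|[pred x | is_leaf e r x]| ->
  has_leaf_comb e r k.
Proof.
move=> D1 k1 [esym eirr econn eacyc] deg hb Lgt.
have nM : ~ Mn e (SS e r (nbhd e r)) r b.+1.
  by move=> /(Mn_minor esym) /hb; rewrite ltnn.
have L' : f D b k < L e r (SS e r (nbhd e r)).
  rewrite (S_root r econn) /L setTI; apply: leq_trans Lgt _.
  by apply/eq_leq/eq_card => x; rewrite !inE.
have [P [Q [[pP sP] tQ nQ dQ]]] :=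
  claim esym eirr eacyc deg (leqnn _) (good_root r eirr) k1 nM L'.
exists (r :: P), (fun i : 'I_k => Q i); split.
- exact: pP.
- by move=> i; have [? ? ? _ _] := tQ i (ltn_ord i).
- by move=> i x; apply: nQ.
- by move=> i j x ij; apply: dQ.
- by move=> i; have [_ _ _ _ ?] := tQ i (ltn_ord i).
Qed.
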